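(* For each $\chi\in Y'$, $\mathcal{A}^{\rm hom}_\chi=(iX_\chi)^*\mathbb{A}^{\rm hom}(iX_\chi)$, where $\mathbb{A}^{\rm hom}$ is the homogenized tensor. In particular, there is a constant $\nu_1>0$, depending only on $\nu_{\rm hom}$, $c_{\rm symrk1}$ and $C_{\rm symrk1}$, such that $\nu_1|\chi|^2|c|^2\le\langle\mathcal{A}^{\rm hom}_\chi c,c\rangle_{\mathbb{C}^3}\le\nu_1^{-1}|\chi|^2|c|^2$ for all $c\in\mathbb{C}^3$ and $\chi\in Y'$.
   Context: $Y=[0,1)^3$, $Y'=[-\pi,\pi)^3$. The tensor $\mathbb{A}$ is $\mathbb{Z}^3$-periodic, real, with entries in $L^\infty(Y)$, satisfies $\mathbb{A}^{ik}_{jl}=\mathbb{A}^{jk}_{il}=\mathbb{A}^{ki}_{lj}$ and $\nu|\xi|^2\le\mathbb{A}(y)\xi:\xi\le\nu^{-1}|\xi|^2$ for real symmetric $\xi$. $X_\chi c=\operatorname{sym}(c\chi^\top)$, viewed as a map $\mathbb{C}^3\to\mathbb{C}^{3\times3}$ (Frobenius inner product). $\mathcal{A}^{\rm hom}_\chi\in\mathbb{C}^{3\times3}$ is defined by $\langle\mathcal{A}^{\rm hom}_\chi c,d\rangle=\int_Y\mathbb{A}(\operatorname{sym}\nabla u_c+iX_\chi c):\overline{iX_\chi d}$, where $u_c\in H^1_\#(Y;\mathbb{C}^3)$ is the mean-zero solution of $\int_Y\mathbb{A}(\operatorname{sym}\nabla u_c+iX_\chi c):\overline{\operatorname{sym}\nabla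 v}=0$ for all periodic $v\in H^1_\#(Y;\mathbb{C}^3)$. Homogenized tensor: for real symmetric $\xi$, $u^\xi\in H^1_\#(Y;\mathbb{R}^3)$ is the mean-zero solution of $\int_Y\mathbb{A}(\xi+\operatorname{sym}\nabla u^\xi):\operatorname{sym}\nabla v=0$ for all $v\in H^1_\#(Y;\mathbb{R}^3)$, and $\mathbb{A}^{\rm hom}$ is the constant tensor with $\mathbb{A}^{\rm hom}\xi:\zeta=\int_Y\mathbb{A}(\xi+\operatorname{sym}\nabla u^\xi):\zeta$; it satisfies $\nu_{\rm hom}|\xi|^2\le\mathbb{A}^{\rm hom}\xi:\xi\le\nu_{\rm hom}^{-1}|\xi|^2$ for some $\nu_{\rm hom}>0$. The constants $c_{\rm symrk1},C_{\rm symrk1}>0$ satisfy $c_{\rm symrk1}|\chi|\|u\|_{L^2}\le\|X_\chi u\|_{L^2}\le C_{\rm symrk1}|\chi|\|u\|_{L^2}$. *)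

(* Defs.v *)
From HB Require Import structures.
From mathcomp Require Import all_boot all_order all_algebra.
From mathcomp Require Import all_classical all_reals all_analysis.
From mathcomp Require Import complex.
Set Implicit Arguments. Unset Strict Implicit. Unset Printing Implicit Defensive.
Import Order.TTheory GRing.Theory Num.Theory.
Import numFieldNormedType.Exports.
Local Open Scope classical_set_scope.
Local Open Scope ring_scope.

Section Defs.
Variable R : realType.
Local Notation C := (complex R).

Definition toC (r : R) : C := Complex r 0.
Definition iC : C := Complex 0 1.
Definition cconj (z : C) : C := Complex (complex.Re z) (- complex.Im z).
Definition cabs2 (z : C) : R := complex.Re z ^+ 2 + complex.Im z ^+ 2.

Definition pt := ((R * R) * R)%type.
Definition coord (y : pt) (j : 'I_3) : R :=
  match val j with 0%N => y.1.1 | 1%N => y.1.2 | _ => y.2 end.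
Definition pt_of (x : 'I_3 -> R) : pt := ((x ord0, x (lift ord0 ord0)), x ord_max).
Definition edir (j : 'I_3) : pt := pt_of (fun k => if k == j then 1 else 0).
Definition shift (y : pt) (m : 'I_3 -> int) : pt := pt_of (fun k => coord y k + (m k)%:~R).
Definition Zperiodic (T : Type) (f : pt -> T) := forall y m, f (shift y m) = f y.

Definition Ycell : set pt := [set y | forall j, 0 <= coord y j < 1].
Definition in_Yprime (chi : 'cV[R]_3) : Prop := forall j, - pi <= chi j 0 < pi.

Definition leb3 := ((@lebesgue_measure R \x @lebesgue_measure R) \x @lebesgue_measure R)%E.

Definition Rint (f : pt -> R) : R := Rintegral leb3 Ycell f.
Definition Cint (f : pt -> C) : C :=
  toC (Rint (fun y => complex.Re (f y))) + iC * toC (Rint (fun y => complex.Im (f y))).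

Definition L2R (f : pt -> R) : Prop :=
  measurable_fun Ycell f /\ leb3.-integrable Ycell (fun y => ((f y) ^+ 2)%:E).
Definition L2C (f : pt -> C) : Prop :=
  L2R (fun y => complex.Re (f y)) /\ L2R (fun y => complex.Im (f y)).

Definition C1per (phi : pt -> R) : Prop :=
  Zperiodic phi /\ continuous phi /\
  forall j, (forall y, derivable phi y (edir j)) /\ continuous (fun y => 'D_(edir j) phi y).

(* H^1_#(Y;C^3): u with weak gradient G, (G y) k j = d_j u_k (y) *)
Definition H1perC (u : pt -> 'cV[C]_3) (G : pt -> 'M[C]_3) : Prop :=
  (forall k, L2C (fun y => u y k 0)) /\ (forall k j, L2C (fun y => G y k j)) /\
  forall phi, C1per phi -> forall k j,
    Cint (fun y => u y k 0 * toC ('D_(edir j) phi y)) = - Cint (fun y => G y k j * toC (phi y)).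

Definition H1perR (u : pt -> 'cV[R]_3) (G : pt -> 'M[R]_3) : Prop :=
  (forall k, L2R (fun y => u y k 0)) /\ (forall k j, L2R (fun y => G y k j)) /\
  forall phi, C1per phi -> forall k j,
    Rint (fun y => u y k 0 * 'D_(edir j) phi y) = - Rint (fun y => G y k j * phi y).

Definition symC (x : 'M[C]_3) : 'M[C]_3 := (toC 2)^-1 *: (x + x^T).
Definition symR (x : 'M[R]_3) : 'M[R]_3 := 2^-1 *: (x + x^T).
Definition conjM (x : 'M[C]_3) : 'M[C]_3 := map_mx cconj x.
Definition ddotC (x z : 'M[C]_3) : C := \sum_i \sum_j x i j * z i j.
Definition ddotR (x z : 'M[R]_3) : R := \sum_i \sum_j x i j * z i j.
Definition frobC (x z : 'M[C]_3) : C := ddotC x (conjM z).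
Definition frobR2 (x : 'M[R]_3) : R := ddotR x x.
Definition dotC (c d : 'cV[C]_3) : C := \sum_k c k 0 * cconj (d k 0).
Definition normC2 (c : 'cV[C]_3) : R := \sum_k cabs2 (c k 0).
Definition normR2 (x : 'cV[R]_3) : R := \sum_k x k 0 ^+ 2.

Definition Xchi (chi : 'cV[R]_3) (c : 'cV[C]_3) : 'M[C]_3 :=
  symC (c *m (map_mx toC chi)^T).
Definition iX (chi : 'cV[R]_3) (c : 'cV[C]_3) : 'M[C]_3 := iC *: Xchi chi c.
(* adjoint (iX_chi)^* : C^{3x3} -> C^3 w.r.t. Frobenius / standard inner products:
   ((iX)^* z)_k = < z , iX e_k >_F *)
Definition iXadj (chi : 'cV[R]_3) (z : 'M[C]_3) : 'cV[C]_3 :=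
  \col_k frobC z (iX chi (delta_mx k 0)).

(* a tensor T is stored as T i k j l = T^{ik}_{jl}, acting as (T xi)_{ij} = sum_{kl} T^{ik}_{jl} xi_{kl} *)
Definition tensor := 'I_3 -> 'I_3 -> 'I_3 -> 'I_3 -> R.
Definition tappC (T : tensor) (x : 'M[C]_3) : 'M[C]_3 :=
  \matrix_(i, j) \sum_k \sum_l toC (T i k j l) * x k l.
Definition tappR (T : tensor) (x : 'M[R]_3) : 'M[R]_3 :=
  \matrix_(i, j) \sum_k \sum_l T i k j l * x k l.

Definition admissible_tensor (A : pt -> tensor) (nu : R) : Prop :=
  0 < nu /\
  (forall i k j l, Zperiodic (fun y => A y i k j l)) /\
  (forall i k j l, measurable_fun Ycell (fun y => A y i k j l)) /\
  (exists M : R, {ae leb3, forall y, Ycell y -> forall i k j l, `|A y i k j l| <= M}) /\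
  {ae leb3, forall y, Ycell y ->
     (forall i k j l, A y i k j l = A y j k i l /\ A y i k j l = A y k i l j) /\
     (forall xi : 'M[R]_3, xi^T = xi ->
        nu * frobR2 xi <= ddotR (tappR (A y) xi) xi <= nu^-1 * frobR2 xi)}.

Definition real_corrector (A : pt -> tensor) (xi : 'M[R]_3)
    (u : pt -> 'cV[R]_3) (G : pt -> 'M[R]_3) : Prop :=
  H1perR u G /\ (forall k, Rint (fun y => u y k 0) = 0) /\
  forall v Gv, H1perR v Gv ->
    Rint (fun y => ddotR (tappR (A y) (xi + symR (G y))) (symR (Gv y))) = 0.

Definition is_Ahom (A : pt -> tensor) (Ahom : tensor) : Prop :=
  forall xi : 'M[R]_3, xi^T = xi -> forall u G, real_corrector A xi u G ->
    forall zeta : 'M[R]_3,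
      ddotR (tappR Ahom xi) zeta = Rint (fun y => ddotR (tappR (A y) (xi + symR (G y))) zeta).

Definition chi_corrector (A : pt -> tensor) (chi : 'cV[R]_3) (c : 'cV[C]_3)
    (u : pt -> 'cV[C]_3) (G : pt -> 'M[C]_3) : Prop :=
  H1perC u G /\ (forall k, Cint (fun y => u y k 0) = 0) /\
  forall v Gv, H1perC v Gv ->
    Cint (fun y => ddotC (tappC (A y) (symC (G y) + iX chi c)) (conjM (symC (Gv y)))) = 0.

Definition Ahom_chi_form (A : pt -> tensor) (chi : 'cV[R]_3) (c d : 'cV[C]_3)
    (G : pt -> 'M[C]_3) : C :=
  Cint (fun y => ddotC (tappC (A y) (symC (G y) + iX chi c)) (conjM (iX chi d))).

Definition L2normC3 (u : pt -> 'cV[C]_3) : R := Num.sqrt (Rint (fun y => normC2 (u y))).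
Definition L2normCM (x : pt -> 'M[C]_3) : R :=
  Num.sqrt (Rint (fun y => \sum_i \sum_j cabs2 (x y i j))).

End Defs.

(* Main.v *)
Require Import Defs.
From HB Require Import structures.
From mathcomp Require Import all_boot all_order all_algebra.
From mathcomp Require Import all_classical all_reals all_analysis.
From mathcomp Require Import complex.
From mathcomp Require Import measurable_realfun ring lra.
Import Order.TTheory GRing.Theory Num.Theory.
Import numFieldNormedType.Exports.
Local Open Scope classical_set_scope.
Local Open Scope ring_scope.
Set Implicit Arguments. Unset Strict Implicit. Unset Printing Implicit Defensive.

Section Alg.
Variable R : realType.
Local Notation C := (complex R).
Local Notation Re := (@complex.Re R).
Local Notation Im := (@complex.Im R).

Lemma ReCD (z w : C) : Re (z + w) = Re z + Re w. Proof. by case: z => a b; case: w => c d /=. Qed.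
Lemma ImCD (z w : C) : Im (z + w) = Im z + Im w. Proof. by case: z => a b; case: w => c d /=. Qed.
Lemma ReCN (z : C) : Re (- z) = - Re z. Proof. by case: z. Qed.
Lemma ImCN (z : C) : Im (- z) = - Im z. Proof. by case: z. Qed.
Lemma ReCM (z w : C) : Re (z * w) = Re z * Re w - Im z * Im w. Proof. by case: z => a b; case: w => c d /=. Qed.
Lemma ImCM (z w : C) : Im (z * w) = Re z * Im w + Im z * Re w. Proof. case: z => a b; case: w => c d /=. ring. Qed.
Lemma ReC0 : Re (0 : C) = 0. Proof. by []. Qed.
Lemma ImC0 : Im (0 : C) = 0. Proof. by []. Qed.
Lemma RetoC (r : R) : Re (toC r) = r. Proof. by []. Qed.
Lemma ImtoC (r : R) : Im (toC r) = 0. Proof. by []. Qed.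
Lemma ReiC : Re (iC R) = 0. Proof. by []. Qed.
Lemma ImiC : Im (iC R) = 1. Proof. by []. Qed.
Lemma Recconj (z : C) : Re (cconj z) = Re z. Proof. by []. Qed.
Lemma Imcconj (z : C) : Im (cconj z) = - Im z. Proof. by []. Qed.
Lemma ReC_sum (I : finType) (F : I -> C) : Re (\sum_i F i) = \sum_i Re (F i).
Proof. by apply: (big_morph _ ReCD ReC0). Qed.
Lemma ImC_sum (I : finType) (F : I -> C) : Im (\sum_i F i) = \sum_i Im (F i).
Proof. by apply: (big_morph _ ImCD ImC0). Qed.
Lemma toCV2 : (toC (2:R))^-1 = toC (2^-1).
Proof. by rewrite (_ : @toC R = real_complex R) // fmorphV. Qed.
Lemma complex_ext (z w : C) : Re z = Re w -> Im z = Im w -> z = w.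
Proof. by case: z; case: w => /= ? ? ? ? -> ->. Qed.
Lemma cconjE (z : C) : cconj z = conjc z. Proof. by case: z. Qed.

Definition ReM (M : 'M[C]_3) : 'M[R]_3 := map_mx Re M.
Definition ImM (M : 'M[C]_3) : 'M[R]_3 := map_mx Im M.

Lemma ReM_tapp (T : tensor R) Z : ReM (tappC T Z) = tappR T (ReM Z).
Proof.
apply/matrixP => i j; rewrite !mxE ReC_sum; apply: eq_bigr => k _.
rewrite ReC_sum; apply: eq_bigr => l _; rewrite ReCM RetoC ImtoC mxE.
by rewrite mul0r subr0.
Qed.

Lemma ImM_tapp (T : tensor R) Z : ImM (tappC T Z) = tappR T (ImM Z).
Proof.
apply/matrixP => i j; rewrite !mxE ImC_sum; apply: eq_bigr => k _.
rewrite ImC_sum; apply: eq_bigr => l _; rewrite ImCM RetoC ImtoC mxE.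
by rewrite mul0r addr0.
Qed.

Lemma ddotC_Re X Y : Re (ddotC X (conjM Y)) = ddotR (ReM X) (ReM Y) + ddotR (ImM X) (ImM Y).
Proof.
rewrite /ddotC /ddotR ReC_sum -big_split; apply: eq_bigr => i _.
rewrite ReC_sum -big_split; apply: eq_bigr => j _.
by rewrite /conjM !mxE ReCM Recconj Imcconj mulrN opprK.
Qed.

Lemma ddotC_Im X Y : Im (ddotC X (conjM Y)) = ddotR (ImM X) (ReM Y) - ddotR (ReM X) (ImM Y).
Proof.
rewrite /ddotC /ddotR ImC_sum -sumrB; apply: eq_bigr => i _.
rewrite ImC_sum -sumrB; apply: eq_bigr => j _.
rewrite /conjM !mxE ImCM Recconj Imcconj; ring.
Qed.

Lemma ReMD x y : ReM (x + y) = ReM x + ReM y.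
Proof. by apply/matrixP => i j; rewrite !mxE ReCD. Qed.
Lemma ImMD x y : ImM (x + y) = ImM x + ImM y.
Proof. by apply/matrixP => i j; rewrite !mxE ImCD. Qed.

Lemma ReM_sym G : ReM (symC G) = symR (ReM G).
Proof.
apply/matrixP => i j; rewrite !mxE toCV2 ReCM RetoC ImtoC mul0r subr0.
by rewrite ReCD.
Qed.
Lemma ImM_sym G : ImM (symC G) = symR (ImM G).
Proof.
apply/matrixP => i j; rewrite !mxE toCV2 ImCM RetoC ImtoC mul0r addr0.
by rewrite ImCD.
Qed.

Lemma ReM_iX chi c : ReM (iX chi c) = - ImM (Xchi chi c).
Proof. by apply/matrixP => i j; rewrite !mxE ReCM ReiC ImiC mul0r mul1r sub0r. Qed.
Lemma ImM_iX chi c : ImM (iX chi c) = ReM (Xchi chi c).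
Proof. by apply/matrixP => i j; rewrite !mxE ImCM ReiC ImiC mul0r mul1r add0r. Qed.

Lemma symC_tr (G : 'M[C]_3) : (symC G)^T = symC G.
Proof. by apply/matrixP => i j; rewrite !mxE addrC. Qed.

Lemma ReM_Xsym chi c : (ReM (Xchi chi c))^T = ReM (Xchi chi c).
Proof. by rewrite /ReM map_trmx symC_tr. Qed.
Lemma ImM_Xsym chi c : (ImM (Xchi chi c))^T = ImM (Xchi chi c).
Proof. by rewrite /ImM map_trmx symC_tr. Qed.

Lemma tappRD (T : tensor R) x y : tappR T (x + y) = tappR T x + tappR T y.
Proof.
apply/matrixP => i j; rewrite !mxE -big_split; apply: eq_bigr => k _.
rewrite -big_split; apply: eq_bigr => l _; by rewrite mxE mulrDr.
Qed.
Lemma tappRN (T : tensor R) x : tappR T (- x) = - tappR T x.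
Proof.
apply/matrixP => i j; rewrite !mxE -sumrN; apply: eq_bigr => k _.
rewrite -sumrN; apply: eq_bigr => l _; by rewrite mxE mulrN.
Qed.
Lemma ddotRDr (x y z : 'M[R]_3) : ddotR x (y + z) = ddotR x y + ddotR x z.
Proof.
rewrite /ddotR -big_split; apply: eq_bigr => i _.
rewrite -big_split; apply: eq_bigr => j _; by rewrite mxE mulrDr.
Qed.
Lemma ddotRNr (x y : 'M[R]_3) : ddotR x (- y) = - ddotR x y.
Proof.
rewrite /ddotR -sumrN; apply: eq_bigr => i _.
rewrite -sumrN; apply: eq_bigr => j _; by rewrite mxE mulrN.
Qed.
Lemma ddotRNl (x y : 'M[R]_3) : ddotR (- x) y = - ddotR x y.
Proof.
rewrite /ddotR -sumrN; apply: eq_bigr => i _.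
rewrite -sumrN; apply: eq_bigr => j _; by rewrite mxE mulNr.
Qed.
Lemma ddotR0r (x : 'M[R]_3) : ddotR x 0 = 0.
Proof.
rewrite /ddotR big1 // => i _; rewrite big1 // => j _; by rewrite mxE mulr0.
Qed.
Lemma ddotRBr (x y z : 'M[R]_3) : ddotR x (y - z) = ddotR x y - ddotR x z.
Proof. by rewrite ddotRDr ddotRNr. Qed.

Lemma ReM_toC (M : 'M[R]_3) : ReM (map_mx (@toC R) M) = M.
Proof. by apply/matrixP => i j; rewrite !mxE. Qed.
Lemma ImM_toC (M : 'M[R]_3) : ImM (map_mx (@toC R) M) = 0.
Proof. by apply/matrixP => i j; rewrite !mxE. Qed.
Lemma symR0 : symR (0 : 'M[R]_3) = 0.
Proof. by rewrite /symR trmx0 addr0 scaler0. Qed.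

Lemma ddot_quad (T : tensor R) P Q :
  ddotR (tappR T P) Q = \sum_(p : 'I_3 * 'I_3) \sum_(q : 'I_3 * 'I_3) T p.1 q.1 p.2 q.2 * P q.1 q.2 * Q p.1 p.2.
Proof.
rewrite /ddotR pair_bigA /=; apply: eq_bigr => [[i j]] _ /=.
rewrite mxE pair_bigA big_distrl /=; apply: eq_bigr => [[k l]] _ /=.
by [].
Qed.

Lemma ddot_sym (T : tensor R) P Q : (forall i k j l, T i k j l = T k i l j) ->
  ddotR (tappR T P) Q = ddotR (tappR T Q) P.
Proof.
move=> HT; rewrite !ddot_quad exchange_big /=.
apply: eq_bigr => p _; apply: eq_bigr => q _.
by rewrite HT mulrAC.
Qed.

Lemma symCD (x y : 'M[C]_3) : symC (x + y) = symC x + symC y.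
Proof. apply/matrixP => i j; rewrite !mxE; ring. Qed.
Lemma symCZ a (x : 'M[C]_3) : symC (a *: x) = a *: symC x.
Proof. apply/matrixP => i j; rewrite !mxE; ring. Qed.
Lemma iXD chi (x y : 'cV[C]_3) : iX chi (x + y) = iX chi x + iX chi y.
Proof. by rewrite /iX /Xchi mulmxDl symCD scalerDr. Qed.
Lemma iXZ chi a (x : 'cV[C]_3) : iX chi (a *: x) = a *: iX chi x.
Proof. by rewrite /iX /Xchi -scalemxAl symCZ !scalerA [iC R * a]mulrC. Qed.
Lemma iX0 chi : iX chi (0 : 'cV[C]_3) = 0.
Proof. by rewrite -(scale0r (0 : 'cV[C]_3)) iXZ scale0r. Qed.

Lemma iX_sum chi (d : 'cV[C]_3) :
  iX chi d = \sum_k d k 0 *: iX chi (delta_mx k 0).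
Proof.
rewrite {1}(matrix_sum_delta d) (big_morph _ (iXD chi) (iX0 chi)).
by apply: eq_bigr => k _; rewrite big_ord1 iXZ.
Qed.

Lemma frobCD (z x y : 'M[C]_3) : frobC z (x + y) = frobC z x + frobC z y.
Proof.
rewrite /frobC /ddotC -big_split; apply: eq_bigr => i _.
rewrite -big_split; apply: eq_bigr => j _.
by rewrite !mxE !cconjE rmorphD mulrDr.
Qed.
Lemma frobCZ (z x : 'M[C]_3) a : frobC z (a *: x) = cconj a * frobC z x.
Proof.
rewrite /frobC /ddotC mulr_sumr; apply: eq_bigr => i _.
rewrite mulr_sumr; apply: eq_bigr => j _.
by rewrite !mxE !cconjE rmorphM mulrCA.
Qed.
Lemma frobC0 (z : 'M[C]_3) : frobC z 0 = 0.
Proof. by rewrite -(scale0r (0 : 'M[C]_3)) frobCZ cconjE rmorph0 mul0r. Qed.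

Lemma adjE chi (z : 'M[C]_3) (d : 'cV[C]_3) :
  dotC (iXadj chi z) d = ddotC z (conjM (iX chi d)).
Proof.
rewrite -/(frobC z (iX chi d)) iX_sum (big_morph _ (frobCD z) (frobC0 z)).
rewrite /dotC; apply: eq_bigr => k _.
by rewrite frobCZ mxE mulrC.
Qed.
End Alg.

Section S.
Variable R : realType.
Let I01 : set R := [set` `[0, 1[%R].

Lemma Ycell_eq : @Ycell R = (I01 `*` I01) `*` I01.
Proof.
apply/seteqP; split.
- move=> [[a b] c] /= H.
  have h0 := H ord0. have h1 := H (lift ord0 ord0). have h2 := H ord_max.
  by rewrite /I01 /= !in_itv /=; split; [split|]; [exact h0|exact h1|exact h2].
- move=> [[a b] c] [[/= ha hb] hc] j.
  rewrite /I01 /= !in_itv /= in ha hb hc.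
  by case: j => [[|[|[|//]]] ?] /=.
Qed.

Definition T3 := ltac:(let t := type of (@leb3 R) in match t with set ?T -> _ => exact T end).
Lemma mYcell : measurable (@Ycell R : set T3).
Proof.
rewrite Ycell_eq; apply: measurableX; [apply: measurableX|]; exact: measurable_itv.
Qed.

Lemma leb3Y : @leb3 R (@Ycell R) = 1%E.
Proof.
rewrite Ycell_eq /leb3 !product_measure1E; try exact: measurable_itv.
  have L : (@lebesgue_measure R `[0%R, 1%R[ = 1)%E.
    by rewrite lebesgue_measure_itv /= lte_fin ltr01 /= sube0.
  rewrite /I01 /= product_measure1E; try exact: measurable_itv.
  rewrite [X in (_ * X)%E]L mule1.
  by apply: (eq_trans (y := (1 * 1)%E)); [congr (_ * _)%E; exact: L | exact: mule1].
by apply: measurableX; exact: measurable_itv.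
Qed.

Local Notation mu := (@leb3 R).
Local Notation Y := (@Ycell R).
Definition Int (f : pt R -> R) := mu.-integrable Y (EFin \o f).

Lemma Int_meas f : Int f -> measurable_fun Y f.
Proof. by move=> /measurable_int /measurable_EFinP. Qed.

Lemma Int_add f g : Int f -> Int g -> Int (fun y => f y + g y).
Proof.
move=> hf hg; apply: (eq_integrable mYcell _ _ _ (integrableD mYcell hf hg)).
by move=> y _ /=; rewrite EFinD.
Qed.
Lemma Int_scale k f : Int f -> Int (fun y => k * f y).
Proof.
move=> hf; apply: (eq_integrable mYcell _ _ _ (integrableZl mYcell k hf)).
by move=> y _ /=; rewrite EFinM.
Qed.
Lemma Int_opp f : Int f -> Int (fun y => - f y).
Proof.
move=> hf; apply: (eq_integrable mYcell _ _ _ (Int_scale (-1) hf)).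
by move=> y _ /=; rewrite mulN1r.
Qed.
Lemma Int_sub f g : Int f -> Int g -> Int (fun y => f y - g y).
Proof. by move=> hf hg; apply: Int_add => //; exact: Int_opp. Qed.
Lemma Int_sum (I : finType) (F : I -> pt R -> R) :
  (forall i, Int (F i)) -> Int (fun y => \sum_i F i y).
Proof.
move=> hF; have H := @integrable_sum _ _ _ mu _ mYcell I (index_enum I) xpredT (fun i => EFin \o F i) (fun i _ => hF i).
apply: (eq_integrable mYcell _ _ _ H) => y _ /=; by rewrite sumEFin.
Qed.
Lemma Int_cst k : Int (fun _ => k).
Proof.
apply: measurable_bounded_integrable => //; first exact: mYcell.
  by apply: (@eq_ind_r _ 1%E (fun x => (x < +oo)%E)); [exact: ltry | exact: leb3Y].
exact: bounded_cst.
Qed.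

Lemma L2R_cst k : @L2R R (fun _ : pt R => k).
Proof. split; first exact: measurable_cst. exact: (Int_cst (k ^+ 2)). Qed.

Lemma L2R_Int f : @L2R R f -> Int (fun y => f y ^+ 2).
Proof. by case. Qed.

Lemma L2R_add f g : @L2R R f -> @L2R R g -> @L2R R (fun y => f y + g y).
Proof.
move=> [mf If] [mg Ig]; split; first exact: measurable_funD.
have H : Int (fun y => 2 * f y ^+ 2 + 2 * g y ^+ 2).
  by apply: Int_add; apply: Int_scale.
apply: (le_integrable mYcell _ _ H).
- apply/measurable_EFinP; apply: measurable_funX; exact: measurable_funD.
- move=> y _ /=; rewrite !lee_fin ger0_norm ?sqr_ge0 // ger0_norm; last first.
    by apply: addr_ge0; apply: mulr_ge0 => //; apply: sqr_ge0.
  rewrite sqrrD; have := sqr_ge0 (f y - g y); rewrite sqrrB => h; lra.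
Qed.
Lemma L2R_scale k f : @L2R R f -> @L2R R (fun y => k * f y).
Proof.
move=> [mf If]; split; first by apply: measurable_funM => //; exact: measurable_cst.
apply: (eq_integrable mYcell _ _ _ (Int_scale (k ^+ 2) If)).
by move=> y _ /=; rewrite exprMn.
Qed.

Lemma mul_le_sq (a b : R) : `|a * b| <= a ^+ 2 + b ^+ 2.
Proof.
rewrite normrM -(real_normK (num_real a)) -(real_normK (num_real b)).
have := sqr_ge0 (`|a| - `|b|); have := normr_ge0 a; have := normr_ge0 b; nra.
Qed.

Lemma Int_mulL2 f g : @L2R R f -> @L2R R g -> Int (fun y => f y * g y).
Proof.
move=> [mf If] [mg Ig].
have H : Int (fun y => f y ^+ 2 + g y ^+ 2) by apply: Int_add.
apply: (le_integrable mYcell _ _ H).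
- apply/measurable_EFinP; exact: measurable_funM.
- move=> y _ /=; rewrite !lee_fin [X in _ <= X]ger0_norm; last first.
    by apply: addr_ge0; apply: sqr_ge0.
  exact: mul_le_sq.
Qed.
Lemma Int_bdd (a h : pt R -> R) : measurable_fun Y a ->
  (exists M, {ae mu, forall y, Y y -> `|a y| <= M}) -> Int h -> Int (fun y => a y * h y).
Proof.
move=> ma [M HM] Ih; have mh := Int_meas Ih.
move/integrableP: (Ih) => [_ hfin].
apply/integrableP; split.
  by apply/measurable_EFinP; apply: measurable_funM.
apply: (le_lt_trans (y := \int[mu]_(y in Y) (`|M|%:E * `|(EFin \o h) y|))%E).
  apply: ae_ge0_le_integral => //.
  - exact: mYcell.
  - apply: measurableT_comp => //; apply/measurable_EFinP; exact: measurable_funM.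
  - apply: emeasurable_funM; first exact: measurable_cst.
    by apply: measurableT_comp => //; apply/measurable_EFinP.
  - case: HM => N [mN N0 HN]; exists N; split => // y /= nP.
    apply: HN => /= Hy; apply: nP => Yy /=.
    rewrite lee_fin normrM ler_wpM2r //.
    exact: le_trans (Hy Yy) (ler_norm M).
rewrite ge0_integralZl //.
- by apply: lte_mul_pinfty.
- exact: mYcell.
- by apply: measurableT_comp => //; apply/measurable_EFinP.
Qed.
End S.

Section Main.
Variable R : realType.
Local Notation C := (complex R).
Local Notation Re := (@complex.Re R).
Local Notation Im := (@complex.Im R).
Local Notation mu := (@leb3 R).
Local Notation Y := (@Ycell R).

Lemma ReCint (f : pt R -> C) : Re (Cint f) = Defs.Rint (fun y => Re (f y)).
Proof. rewrite /Cint /=; ring. Qed.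
Lemma ImCint (f : pt R -> C) : Im (Cint f) = Defs.Rint (fun y => Im (f y)).
Proof. rewrite /Cint /=; ring. Qed.

Lemma Rint_cst (k : R) : Defs.Rint (fun _ : pt R => k) = k.
Proof.
rewrite /Defs.Rint (Rintegral_cst _ (@mYcell R)).
have -> : fine (leb3 Y) = 1 by rewrite leb3Y.
by rewrite mulr1.
Qed.

Lemma Rint_ext (f g : pt R -> R) : (forall y, f y = g y) -> Defs.Rint f = Defs.Rint g.
Proof. by move=> H; congr Defs.Rint; apply: funext. Qed.
Lemma Int_ext (f g : pt R -> R) : (forall y, f y = g y) -> Int f -> Int g.
Proof. by move=> H; have -> : f = g by apply: funext. Qed.

Definition L2M (F : pt R -> 'M[R]_3) := forall i j, @L2R R (fun y => F y i j).

Lemma L2M_cst (M : 'M[R]_3) : L2M (fun _ => M).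
Proof. by move=> i j; apply: L2R_cst. Qed.
Lemma L2M_add F1 F2 : L2M F1 -> L2M F2 -> L2M (fun y => F1 y + F2 y).
Proof.
move=> h1 h2 i j.
suff -> : (fun y => (F1 y + F2 y) i j) = (fun y => F1 y i j + F2 y i j) by exact: L2R_add.
by apply: funext => y; rewrite mxE.
Qed.
Lemma L2M_opp F : L2M F -> L2M (fun y => - F y).
Proof.
move=> h i j.
suff -> : (fun y => (- F y) i j) = (fun y => -1 * F y i j) by exact: L2R_scale.
by apply: funext => y; rewrite mxE mulN1r.
Qed.
Lemma L2M_sym F : L2M F -> L2M (fun y => symR (F y)).
Proof.
move=> h i j.
suff -> : (fun y => (symR (F y)) i j) = (fun y => 2^-1 * (F y i j + F y j i)).
  by apply: L2R_scale; exact: L2R_add.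
by apply: funext => y; rewrite !mxE.
Qed.

Lemma Int_ddot A nu P S : admissible_tensor A nu -> L2M P -> L2M S ->
  Int (fun y => ddotR (tappR (A y) (P y)) (S y)).
Proof.
case=> _ [_ [mA [[M HM] _]]] HP HS.
rewrite /ddotR; apply: Int_sum => i; apply: Int_sum => j.
apply: (@Int_ext (fun y => \sum_k \sum_l A y i k j l * (P y k l * S y i j))).
  move=> y; rewrite mxE big_distrl /=; apply: eq_bigr => k _.
  by rewrite big_distrl /=; apply: eq_bigr => l _; rewrite mulrA.
apply: Int_sum => k; apply: Int_sum => l.
apply: Int_bdd; first exact: mA.
  exists M; case: HM => N [mN N0 HN]; exists N; split => // y /= nP.
  by apply: HN => /= H; apply: nP => Yy; exact: H Yy i k j l.
exact: Int_mulL2.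
Qed.

Lemma ReM_corr chi c (G : 'M[C]_3) :
  ReM (symC G + iX chi c) = - ImM (Xchi chi c) + symR (ReM G).
Proof. by rewrite ReMD ReM_sym ReM_iX addrC. Qed.
Lemma ImM_corr chi c (G : 'M[C]_3) :
  ImM (symC G + iX chi c) = ReM (Xchi chi c) + symR (ImM G).
Proof. by rewrite ImMD ImM_sym ImM_iX addrC. Qed.

Lemma L2M_Re (G : pt R -> 'M[C]_3) : (forall k j, L2C (fun y => G y k j)) ->
  L2M (fun y => ReM (G y)).
Proof.
move=> h i j; suff -> : (fun y => ReM (G y) i j) = (fun y => Re (G y i j)) by exact: (h i j).1.
by apply: funext => y; rewrite mxE.
Qed.
Lemma L2M_Im (G : pt R -> 'M[C]_3) : (forall k j, L2C (fun y => G y k j)) ->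
  L2M (fun y => ImM (G y)).
Proof.
move=> h i j; suff -> : (fun y => ImM (G y) i j) = (fun y => Im (G y i j)) by exact: (h i j).2.
by apply: funext => y; rewrite mxE.
Qed.

Lemma H1_Re u G : H1perC u G ->
  H1perR (fun y => map_mx Re (u y)) (fun y => ReM (G y)).
Proof.
case=> [Lu [LG W]]; split; [|split].
- move=> k; suff -> : (fun y => map_mx Re (u y) k 0) = (fun y => Re (u y k 0)) by exact: (Lu k).1.
  by apply: funext => y; rewrite mxE.
- exact: L2M_Re.
- move=> phi hphi k j; have := congr1 Re (W phi hphi k j).
  rewrite ReCN !ReCint => E.
  under Rint_ext => y do rewrite mxE.
  under [in RHS]Rint_ext => y do rewrite mxE.
  rewrite -[LHS](Rint_ext (f := fun y => Re (u y k 0 * toC ('D_(edir R j) phi y)))); last first.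
    by move=> y; rewrite ReCM RetoC ImtoC mulr0 subr0.
  rewrite E; congr (- _); apply: Rint_ext => y.
  by rewrite ReCM RetoC ImtoC mulr0 subr0.
Qed.

Lemma H1_Im u G : H1perC u G ->
  H1perR (fun y => map_mx Im (u y)) (fun y => ImM (G y)).
Proof.
case=> [Lu [LG W]]; split; [|split].
- move=> k; suff -> : (fun y => map_mx Im (u y) k 0) = (fun y => Im (u y k 0)) by exact: (Lu k).2.
  by apply: funext => y; rewrite mxE.
- exact: L2M_Im.
- move=> phi hphi k j; have := congr1 Im (W phi hphi k j).
  rewrite ImCN !ImCint => E.
  under Rint_ext => y do rewrite mxE.
  under [in RHS]Rint_ext => y do rewrite mxE.
  rewrite -[LHS](Rint_ext (f := fun y => Im (u y k 0 * toC ('D_(edir R j) phi y)))); last first.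
    by move=> y; rewrite ImCM RetoC ImtoC mulr0 add0r.
  rewrite E; congr (- _); apply: Rint_ext => y.
  by rewrite ImCM RetoC ImtoC mulr0 add0r.
Qed.

Lemma H1_toC v Gv : H1perR v Gv ->
  H1perC (fun y => map_mx (@toC R) (v y)) (fun y => map_mx (@toC R) (Gv y)).
Proof.
case=> [Lv [LG W]]; split; [|split].
- move=> k; split.
    suff -> : (fun y => Re (map_mx (@toC R) (v y) k 0)) = (fun y => v y k 0) by exact: Lv.
    by apply: funext => y; rewrite mxE.
  suff -> : (fun y => Im (map_mx (@toC R) (v y) k 0)) = (fun y => 0) by exact: L2R_cst.
  by apply: funext => y; rewrite mxE.
- move=> k j; split.
    suff -> : (fun y => Re (map_mx (@toC R) (Gv y) k j)) = (fun y => Gv y k j) by exact: LG.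
    by apply: funext => y; rewrite mxE.
  suff -> : (fun y => Im (map_mx (@toC R) (Gv y) k j)) = (fun y => 0) by exact: L2R_cst.
  by apply: funext => y; rewrite mxE.
- move=> phi hphi k j; apply: complex_ext.
    rewrite ReCN !ReCint.
    rewrite (Rint_ext (g := fun y => v y k 0 * 'D_(edir R j) phi y)); last first.
      by move=> y; rewrite mxE ReCM !RetoC !ImtoC mulr0 subr0.
    rewrite [in RHS](Rint_ext (g := fun y => Gv y k j * phi y)); last first.
      by move=> y; rewrite mxE ReCM !RetoC !ImtoC mulr0 subr0.
    exact: W.
  rewrite ImCN !ImCint.
  rewrite (Rint_ext (g := fun _ => 0)); last by move=> y; rewrite mxE ImCM !RetoC !ImtoC mulr0 mul0r addr0.
  rewrite [in RHS](Rint_ext (g := fun _ => 0)); last by move=> y; rewrite mxE ImCM !RetoC !ImtoC mulr0 mul0r addr0.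
  by rewrite Rint_cst oppr0.
Qed.

Lemma orth_parts (A : pt R -> tensor R) chi c (u : pt R -> 'cV[C]_3) G : chi_corrector A chi c u G -> forall v Gv, H1perR v Gv ->
  Defs.Rint (fun y => ddotR (tappR (A y) (- ImM (Xchi chi c) + symR (ReM (G y)))) (symR (Gv y))) = 0 /\
  Defs.Rint (fun y => ddotR (tappR (A y) (ReM (Xchi chi c) + symR (ImM (G y)))) (symR (Gv y))) = 0.
Proof.
case=> [_ [_ O]] v Gv hv; have E := O _ _ (H1_toC hv).
split.
- have E1 := congr1 Re E; rewrite ReCint in E1.
  apply: (eq_trans _ E1); apply: Rint_ext => y.
  rewrite ddotC_Re ReM_tapp ImM_tapp ReM_corr ImM_corr ReM_sym ImM_sym ReM_toC ImM_toC symR0.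
  by rewrite ddotR0r addr0.
- have E1 := congr1 Im E; rewrite ImCint in E1.
  apply: (eq_trans _ E1); apply: Rint_ext => y.
  rewrite ddotC_Im ReM_tapp ImM_tapp ReM_corr ImM_corr ReM_sym ImM_sym ReM_toC ImM_toC symR0.
  by rewrite ddotR0r subr0.
Qed.

Lemma corrR (A : pt R -> tensor R) chi c (u : pt R -> 'cV[C]_3) G : chi_corrector A chi c u G ->
  real_corrector A (- ImM (Xchi chi c)) (fun y => map_mx Re (u y)) (fun y => ReM (G y)).
Proof.
move=> hc; split; [|split].
- by apply: H1_Re; case: hc.
- move=> k; case: hc => _ [M0 _]; have := congr1 Re (M0 k); rewrite ReCint => E.
  apply: (eq_trans _ E); apply: Rint_ext => y; by rewrite mxE.
- by move=> v Gv hv; exact: (orth_parts hc hv).1.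
Qed.

Lemma corrI (A : pt R -> tensor R) chi c (u : pt R -> 'cV[C]_3) G : chi_corrector A chi c u G ->
  real_corrector A (ReM (Xchi chi c)) (fun y => map_mx Im (u y)) (fun y => ImM (G y)).
Proof.
move=> hc; split; [|split].
- by apply: H1_Im; case: hc.
- move=> k; case: hc => _ [M0 _]; have := congr1 Im (M0 k); rewrite ImCint => E.
  apply: (eq_trans _ E); apply: Rint_ext => y; by rewrite mxE.
- by move=> v Gv hv; exact: (orth_parts hc hv).2.
Qed.

Lemma RintD (f g : pt R -> R) : Int f -> Int g ->
  Defs.Rint (fun y => f y + g y) = Defs.Rint f + Defs.Rint g.
Proof. by move=> hf hg; rewrite /Defs.Rint RintegralD //; exact: mYcell. Qed.
Lemma RintB (f g : pt R -> R) : Int f -> Int g ->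
  Defs.Rint (fun y => f y - g y) = Defs.Rint f - Defs.Rint g.
Proof. by move=> hf hg; rewrite /Defs.Rint RintegralB //; exact: mYcell. Qed.

Lemma Int_corr (A : pt R -> tensor R) nu (xi : 'M[R]_3) (H Z : pt R -> 'M[R]_3) :
  admissible_tensor A nu -> L2M H -> L2M Z ->
  Int (fun y => ddotR (tappR (A y) (xi + symR (H y))) (Z y)).
Proof.
move=> hA hH hZ; apply: (Int_ddot (P := fun y => xi + symR (H y))) hA _ hZ.
by apply: L2M_add; [exact: L2M_cst | exact: L2M_sym].
Qed.

Lemma trN_sym (x : 'M[R]_3) : x^T = x -> (- x)^T = - x.
Proof. by move=> h; rewrite linearN /= h. Qed.

Lemma claim1 (A : pt R -> tensor R) nu Ahom chi c d (u : pt R -> 'cV[C]_3) G :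
  admissible_tensor A nu -> is_Ahom A Ahom -> chi_corrector A chi c u G ->
  dotC (iXadj chi (tappC Ahom (iX chi c))) d = Ahom_chi_form A chi c d G.
Proof.
move=> hA hH hc.
have LG : forall k j, L2C (fun y => G y k j) by case: hc => [[_ [LG _]] _].
have HQ := hH _ (trN_sym (ImM_Xsym chi c)) _ _ (corrR hc).
have HP := hH _ (ReM_Xsym chi c) _ _ (corrI hc).
rewrite adjE /Ahom_chi_form; apply: complex_ext.
- rewrite ReCint ddotC_Re ReM_tapp ImM_tapp !ReM_iX !ImM_iX.
  under Rint_ext => y do rewrite ddotC_Re ReM_tapp ImM_tapp ReM_corr ImM_corr ReM_iX ImM_iX.
  rewrite RintD; first by rewrite -HQ -HP.
  + by apply: Int_corr hA _ _; [exact: L2M_Re | exact: L2M_cst].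
  + by apply: Int_corr hA _ _; [exact: L2M_Im | exact: L2M_cst].
- rewrite ImCint ddotC_Im ReM_tapp ImM_tapp !ReM_iX !ImM_iX.
  under Rint_ext => y do rewrite ddotC_Im ReM_tapp ImM_tapp ReM_corr ImM_corr ReM_iX ImM_iX.
  rewrite RintB; first by rewrite -HQ -HP.
  + by apply: Int_corr hA _ _; [exact: L2M_Im | exact: L2M_cst].
  + by apply: Int_corr hA _ _; [exact: L2M_Re | exact: L2M_cst].
Qed.

Lemma Ahom_sym (A : pt R -> tensor R) nu Ahom chi c (u : pt R -> 'cV[C]_3) G :
  admissible_tensor A nu -> is_Ahom A Ahom -> chi_corrector A chi c u G ->
  ddotR (tappR Ahom (ReM (Xchi chi c))) (- ImM (Xchi chi c)) =
  ddotR (tappR Ahom (- ImM (Xchi chi c))) (ReM (Xchi chi c)).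
Proof.
move=> hA hH hc.
have LG : forall k j, L2C (fun y => G y k j) by case: hc => [[_ [LG _]] _].
have hu : H1perC u G by case: hc.
have cR := corrR hc; have cI := corrI hc.
rewrite (hH _ (ReM_Xsym chi c) _ _ cI) (hH _ (trN_sym (ImM_Xsym chi c)) _ _ cR).
have oR := cR.2.2 _ _ (H1_Im hu).
have oI := cI.2.2 _ _ (H1_Re hu).
rewrite (Rint_ext (g := fun y =>
   ddotR (tappR (A y) (ReM (Xchi chi c) + symR (ImM (G y)))) (- ImM (Xchi chi c) + symR (ReM (G y)))
 - ddotR (tappR (A y) (ReM (Xchi chi c) + symR (ImM (G y)))) (symR (ReM (G y))))); last first.
  by move=> y; rewrite -ddotRBr addrK.
rewrite [in RHS](Rint_ext (g := fun y =>
   ddotR (tappR (A y) (- ImM (Xchi chi c) + symR (ReM (G y)))) (ReM (Xchi chi c) + symR (ImM (G y)))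
 - ddotR (tappR (A y) (- ImM (Xchi chi c) + symR (ReM (G y)))) (symR (ImM (G y))))); last first.
  by move=> y; rewrite -ddotRBr addrK.
rewrite RintB; last 2 first.
- by apply: Int_corr hA _ _; [exact: L2M_Im | apply: L2M_add; [exact: L2M_cst | apply: L2M_sym; exact: L2M_Re]].
- by apply: Int_corr hA _ _; [exact: L2M_Im | apply: L2M_sym; exact: L2M_Re].
rewrite RintB; last 2 first.
- by apply: Int_corr hA _ _; [exact: L2M_Re | apply: L2M_add; [exact: L2M_cst | apply: L2M_sym; exact: L2M_Im]].
- by apply: Int_corr hA _ _; [exact: L2M_Re | apply: L2M_sym; exact: L2M_Im].
rewrite oR oI !subr0 /Defs.Rint /Rintegral; congr fine.
have I1 : Int (fun y => ddotR (tappR (A y) (ReM (Xchi chi c) + symR (ImM (G y)))) (- ImM (Xchi chi c) + symR (ReM (G y)))).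
  by apply: Int_corr hA _ _; [exact: L2M_Im | apply: L2M_add; [exact: L2M_cst | apply: L2M_sym; exact: L2M_Re]].
have I2 : Int (fun y => ddotR (tappR (A y) (- ImM (Xchi chi c) + symR (ReM (G y)))) (ReM (Xchi chi c) + symR (ImM (G y)))).
  by apply: Int_corr hA _ _; [exact: L2M_Re | apply: L2M_add; [exact: L2M_cst | apply: L2M_sym; exact: L2M_Im]].
apply: ae_eq_integral.
- exact: mYcell.
- exact: measurable_int I1.
- exact: measurable_int I2.
case: hA => _ [_ [_ [_ Hs]]].
case: Hs => N [mN N0 HN]; exists N; split => // y /= nP.
apply: HN => /= H; apply: nP => Yy; congr EFin.
apply: ddot_sym => i k j l; exact: ((H Yy).1 i k j l).2.
Qed.

Lemma sq_le (x y : R) : 0 <= x -> x <= y -> x ^+ 2 <= y ^+ 2.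
Proof. move=> h0 h1; nra. Qed.

End Main.

Theorem proposition5p5 (R : realType) :
  exists nu1 : R -> R -> R -> R,
  (forall a b c : R, 0 < a -> 0 < b -> 0 < c -> 0 < nu1 a b c) /\
  forall (A : pt R -> tensor R) (Ahom : tensor R) (nu nuhom csr Csr : R),
    admissible_tensor A nu ->
    is_Ahom A Ahom ->
    0 < nuhom ->
    (forall xi : 'M[R]_3, xi^T = xi ->
       nuhom * frobR2 xi <= ddotR (tappR Ahom xi) xi <= nuhom^-1 * frobR2 xi) ->
    0 < csr -> 0 < Csr ->
    (forall chi : 'cV[R]_3, in_Yprime chi ->
     forall u : pt R -> 'cV[complex R]_3, (forall k, L2C (fun y => u y k 0)) ->
       csr * Num.sqrt (normR2 chi) * L2normC3 u <= L2normCM (fun y => Xchi chi (u y))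
       <= Csr * Num.sqrt (normR2 chi) * L2normC3 u) ->
    (forall chi : 'cV[R]_3, in_Yprime chi ->
     forall (c d : 'cV[complex R]_3) u G, chi_corrector A chi c u G ->
       dotC (iXadj chi (tappC Ahom (iX chi c))) d = Ahom_chi_form A chi c d G) /\
    (forall chi : 'cV[R]_3, in_Yprime chi ->
     forall (c : 'cV[complex R]_3) u G, chi_corrector A chi c u G ->
       toC (nu1 nuhom csr Csr * normR2 chi * normC2 c) <= Ahom_chi_form A chi c c G
       <= toC ((nu1 nuhom csr Csr)^-1 * normR2 chi * normC2 c)).
Proof.
exists (fun a b c => Num.min (a * b ^+ 2) (a / c ^+ 2)); split.
  move=> a b c ha hb hc; rewrite lt_min; apply/andP; split.
    by apply: mulr_gt0 => //; exact: exprn_gt0.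
  by apply: divr_gt0 => //; exact: exprn_gt0.
move=> A Ahom nu nuhom csr Csr hA hH hnu hcoer hcsr hCsr hX.
have C1 : forall chi : 'cV[R]_3, in_Yprime chi ->
   forall (c d : 'cV[complex R]_3) u G, chi_corrector A chi c u G ->
   dotC (iXadj chi (tappC Ahom (iX chi c))) d = Ahom_chi_form A chi c d G.
  by move=> chi _ c d u G hc; exact: claim1 hA hH hc.
split => //.
move=> chi hchi c u G hc.
rewrite -(C1 chi hchi c c u G hc) adjE.
set nu1 := Num.min _ _.
set a := ReM (Xchi chi c); set b := ImM (Xchi chi c).
set N := normR2 chi; set K := normC2 c.
set S := \sum_i \sum_j cabs2 (Xchi chi c i j).
have ReW : complex.Re (ddotC (tappC Ahom (iX chi c)) (conjM (iX chi c))) =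
    ddotR (tappR Ahom b) b + ddotR (tappR Ahom a) a.
  by rewrite ddotC_Re ReM_tapp ImM_tapp !ReM_iX !ImM_iX tappRN ddotRNl ddotRNr opprK.
have ImW : complex.Im (ddotC (tappC Ahom (iX chi c)) (conjM (iX chi c))) = 0.
  by rewrite ddotC_Im ReM_tapp ImM_tapp !ReM_iX !ImM_iX (Ahom_sym hA hH hc) subrr.
have Sdef : S = frobR2 a + frobR2 b.
  rewrite /S /frobR2 /ddotR -big_split; apply: eq_bigr => i _.
  rewrite -big_split; apply: eq_bigr => j _; by rewrite !mxE /cabs2 !expr2.
have N0 : 0 <= N by apply: sumr_ge0 => i _; exact: sqr_ge0.
have K0 : 0 <= K by apply: sumr_ge0 => i _; apply: addr_ge0; exact: sqr_ge0.
have S0 : 0 <= S by apply: sumr_ge0 => i _; apply: sumr_ge0 => j _; apply: addr_ge0; exact: sqr_ge0.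
have hXc := hX chi hchi (fun _ => c) (fun k => conj (L2R_cst _) (L2R_cst _)).
rewrite /L2normC3 /L2normCM !Rint_cst -/K -/S in hXc.
case/andP: hXc => hX1 hX2.
have sN := sqrtr_ge0 N; have sK := sqrtr_ge0 K.
have p1 : 0 <= csr * Num.sqrt N * Num.sqrt K.
  by apply: mulr_ge0 => //; apply: mulr_ge0 => //; exact: ltW.
have hS1 : csr ^+ 2 * N * K <= S.
  by have := sq_le p1 hX1; rewrite !exprMn !sqr_sqrtr.
have hS2 : S <= Csr ^+ 2 * N * K.
  by have := sq_le (sqrtr_ge0 _) hX2; rewrite !exprMn !sqr_sqrtr.
have ca := hcoer a (ReM_Xsym chi c); have cb := hcoer b (ImM_Xsym chi c).
case/andP: ca => ca1 ca2; case/andP: cb => cb1 cb2.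
have nu1p : 0 < nu1.
  rewrite lt_min; apply/andP; split.
    by apply: mulr_gt0 => //; exact: exprn_gt0.
  by apply: divr_gt0 => //; exact: exprn_gt0.
have h1 : nu1 <= nuhom * csr ^+ 2 by rewrite ge_min lexx.
have h2 : nu1 <= nuhom / Csr ^+ 2 by rewrite ge_min lexx orbT.
have h3 : nuhom^-1 * Csr ^+ 2 <= nu1^-1.
  have e : nuhom^-1 * Csr ^+ 2 = (nuhom / Csr ^+ 2)^-1 by rewrite invf_div mulrC.
  rewrite e lef_pV2 ?posrE //.
  by apply: divr_gt0 => //; exact: exprn_gt0.
have NK0 : 0 <= N * K by apply: mulr_ge0.
have l1 := ler_wpM2r NK0 h1.
have l2 := ler_wpM2r NK0 h3.
have hnu0 : 0 <= nuhom by exact: ltW.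
have hnui0 : 0 <= nuhom^-1 by rewrite invr_ge0.
have l3 := ler_wpM2l hnu0 hS1.
have l4 := ler_wpM2l hnui0 hS2.
apply/andP; split; rewrite lecE ImW /toC /=; apply/andP; split => //.
- rewrite ReW; rewrite Sdef in l3.
  have e1 : nu1 * N * K = nu1 * (N * K) by rewrite mulrA.
  have e2 : nuhom * (csr ^+ 2 * N * K) = nuhom * csr ^+ 2 * (N * K) by rewrite !mulrA.
  rewrite e1; rewrite e2 in l3; lra.
- rewrite ReW; rewrite Sdef in l4.
  have e1 : nu1^-1 * N * K = nu1^-1 * (N * K) by rewrite mulrA.
  have e2 : nuhom^-1 * (Csr ^+ 2 * N * K) = nuhom^-1 * Csr ^+ 2 * (N * K) by rewrite !mulrA.
  rewrite e1; rewrite e2 in l4; lra.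
Qed.
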